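(* Let $p,q$ be positive integers with $2\le p/q<4$, let $G$ be a graph and $f$ a $(p,q)$-colouring of $G$, and let $f'$ be the $(p,q)$-colouring obtained from $f$ by recolouring a vertex set $X$ by $1$ (i.e. $f'(v)\equiv f(v)+1\pmod p$ for $v\in X$, $f'(v)=f(v)$ otherwise, and $f'$ is assumed to be a $(p,q)$-colouring). Then $f'$ can be obtained from $f$ by a sequence of recolourings of single vertices, in which every intermediate map is a $(p,q)$-colouring, if and only if the induced subdigraph $D_f[X]$ contains no directed cycle.
   Context: A $(p,q)$-colouring of $G$ is a map $f:V(G)\to\{0,\dots,p-1\}$ with $q\le|f(u)-f(v)|\le p-q$ for every edge $uv$. $D_f$ is the digraph on $V(G)$ with an arc $\overrightarrow{xy}$ whenever $xy\in E(G)$ and $f(y)-f(x)\equiv q\pmod p$ (so when $p=2q$ every edge of $G$ gives arcs in both directions, i.e. a directed 2-cycle). Directed cycles include directed 2-cycles. *)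

(* Defs.v *)
From mathcomp Require Import all_boot.
From Stdlib Require Import Relations.
Set Implicit Arguments. Unset Strict Implicit. Unset Printing Implicit Defensive.

Section Defs.
Variable T : finType.

Definition natdist (m n : nat) : nat := (m - n) + (n - m).

Definition pq_colouring (e : rel T) (p q : nat) (f : T -> nat) : Prop :=
  (forall v, f v < p) /\
  (forall u v, e u v -> q <= natdist (f u) (f v) <= p - q).

Definition Darc (e : rel T) (p q : nat) (f : T -> nat) : rel T :=
  fun x y => e x y && (f y == f x + q %[mod p]).

(* D_f[X] contains a directed cycle (directed 2-cycles allowed):
   distinct vertices x_0,...,x_{k-1} of X, k >= 2, with arcs x_i -> x_{i+1 mod k} *)
Definition has_dicycle_in (e : rel T) (p q : nat) (f : T -> nat) (X : {set T}) : Prop :=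
  exists s : seq T, [/\ 2 <= size s, uniq s, all (fun x => x \in X) s
                     & cycle (Darc e p q f) s].

Definition recolour_by1 (p : nat) (f : T -> nat) (X : {set T}) : T -> nat :=
  fun v => if v \in X then (f v + 1) %% p else f v.

Definition recol_step (e : rel T) (p q : nat) (g h : T -> nat) : Prop :=
  pq_colouring e p q g /\ pq_colouring e p q h /\
  exists v : T, forall w, w != v -> g w = h w.

Definition reconfigurable (e : rel T) (p q : nat) : relation (T -> nat) :=
  clos_refl_trans (T -> nat) (recol_step e p q).

End Defs.

(* Main.v *)
Require Import Defs.
From Stdlib Require Import Relations FunctionalExtensionality.
From mathcomp Require Import all_boot zify.
Lemma mod2 p x : 0 < p -> x < 2 * p -> (x < p /\ x %% p = x) \/ (p <= x /\ x %% p = x - p).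
Proof.
move=> p0 hx; case: (ltnP x p) => h.
  by left; rewrite modn_small.
right; split=> //. rewrite -{1}(subnK h) modnDr modn_small //. lia.
Qed.
Lemma frozen_arith p q a b c d : 0 < q -> 2 * q <= p -> p < 4 * q ->
  a < p -> b < p -> c < p -> d < p ->
  b %% p = (a + q) %% p -> a %% p = (d + q) %% p ->
  q <= natdist c b <= p - q -> q <= natdist d c <= p - q -> c = a.
Proof.
move=> q0 h2 h4 ap bp cp dp. rewrite (modn_small bp) (modn_small ap).
have p0 : 0 < p by lia.
have := @mod2 p (a + q) p0 ltac:(lia); case=> -[? ->];
have := @mod2 p (d + q) p0 ltac:(lia); case=> -[? ->]; rewrite /natdist; lia.
Qed.
Lemma step_arith p q a b : 0 < q -> 2 * q <= p -> a < p -> b < p ->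
  q <= natdist a b <= p - q -> b %% p != (a + q) %% p ->
  q <= natdist ((a + 1) %% p) b <= p - q /\ q <= natdist b ((a + 1) %% p) <= p - q.
Proof.
move=> q0 h2 ap bp. rewrite (modn_small bp).
have p0 : 0 < p by lia.
have := @mod2 p (a + q) p0 ltac:(lia); case=> -[? ->];
have := @mod2 p (a + 1) p0 ltac:(lia); case=> -[? ->]; rewrite /natdist => H /eqP; lia.
Qed.

Lemma frozen (T : finType) (e : rel T) p q f (s : seq T) : irreflexive e ->
  0 < q -> 2 * q <= p -> p < 4 * q -> cycle (Darc e p q f) s ->
  forall g h, reconfigurable e p q g h ->
  {in s, forall x, g x = f x} -> {in s, forall x, h x = f x}.
Proof.
move=> irr q0 h2 h4 cs g h; elim => {g h}.
- move=> g h [[gp ge] [[hp he] [v hv]]] gs x xs.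
  case: (eqVneq x v) => [exv|xv]; last by rewrite -hv // gs.
  subst x; rename xs into vs.
  have /andP[evy /eqP my] := next_cycle cs vs.
  have /andP[ezv /eqP mz] := prev_cycle cs vs.
  set y := next s v in evy my; set z := prev s v in ezv mz.
  have yv : y != v by apply/eqP=> yv; move: evy; rewrite yv irr.
  have zv : z != v by apply/eqP=> zv; move: ezv; rewrite zv irr.
  have ys : y \in s by rewrite mem_next.
  have zs : z \in s by rewrite mem_prev.
  have hy : h y = f y by rewrite -hv // gs.
  have hz : h z = f z by rewrite -hv // gs.
  have fvp : f v < p by rewrite -gs.
  have fyp : f y < p by rewrite -gs.
  have fzp : f z < p by rewrite -gs.
  apply: (@frozen_arith p q (f v) (f y) (h v) (f z)) => //.
  + by rewrite -hy; apply: he.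
  + by rewrite -hz; apply: he.
- by [].
- move=> g h k _ IH1 _ IH2 gs; exact: IH2 (IH1 gs).
Qed.

Lemma exists_sink (T : finType) (e : rel T) p q f (X : {set T}) x0 :
  irreflexive e -> x0 \in X -> ~ has_dicycle_in e p q f X ->
  exists2 x, x \in X & forall y, y \in X -> ~~ Darc e p q f x y.
Proof.
move=> irr x0X ndc.
pose r := [rel x y | [&& x \in X, y \in X & Darc e p q f x y]].
pose R x := #|[set y | connect r x y]|.
case: (arg_minnP R x0X) => x xX xmin.
exists x => // y yX; apply/negP => dxy.
have rxy : r x y by apply/and3P.
have sub : [set z | connect r y z] \subset [set z | connect r x z].
  apply/subsetP => z; rewrite !inE => cyz; apply: connect_trans _ cyz; apply: connect1; exact: rxy.
have nyx : ~~ connect r y x.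
  apply/negP => /connectP [p0 pth].
  case: (shortenP pth) => p' pth' uq _ lst.
  have cyc : cycle r (y :: p') by rewrite /= rcons_path pth' -lst; exact: rxy.
  apply: ndc; exists (y :: p'); split => //.
  - case: p' {pth' uq cyc} lst => //= lst.
    by move: rxy; rewrite -lst => /and3P[_ _ /andP[]]; rewrite irr.
  - apply/allP => z zs; have := next_cycle cyc zs; by case/and3P.
  - by apply: sub_cycle cyc => a b /and3P[_ _ ->].
have : #|[set z | connect r y z]| < #|[set z | connect r x z]|.
  apply: proper_card; rewrite properE sub /=; apply/subsetPn; exists x.
    by rewrite inE connect0.
  by rewrite inE.
by rewrite ltnNge (xmin y yX).
Qed.

Lemma backward (T : finType) (e : rel T) p q : symmetric e -> irreflexive e ->
  0 < q -> 2 * q <= p -> p < 4 * q ->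
  forall n f (X : {set T}), #|X| = n -> pq_colouring e p q f ->
  pq_colouring e p q (recolour_by1 p f X) -> ~ has_dicycle_in e p q f X ->
  reconfigurable e p q f (recolour_by1 p f X).
Proof.
move=> sym irr q0 h2 h4; elim => [|n IH] f X cX fc fc' nd.
  have -> : recolour_by1 p f X = f.
    apply: functional_extensionality => v; rewrite /recolour_by1.
    by move/eqP: cX; rewrite cards_eq0 => /eqP ->; rewrite inE.
  exact: rt_refl.
have [x0 x0X] : exists x, x \in X by apply/set0Pn; rewrite -card_gt0 cX.
have [x xX sink] := @exists_sink _ _ _ _ _ _ _ irr x0X nd.
pose f1 := recolour_by1 p f [set x].
have p0 : 0 < p by lia.
have f1E v : v != x -> f1 v = f v by move=> vx; rewrite /f1 /recolour_by1 inE (negbTE vx).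
have f1x : f1 x = (f x + 1) %% p by rewrite /f1 /recolour_by1 inE eqxx.
have e1 : recolour_by1 p f1 (X :\ x) = recolour_by1 p f X.
  apply: functional_extensionality => v; rewrite /recolour_by1 !inE.
  case: (eqVneq v x) => [->|vx] /=; first by rewrite xX -f1x.
  by rewrite f1E.
case: fc => fp fe.
have f1c : pq_colouring e p q f1.
  split=> [v|u v euv].
    case: (eqVneq v x) => [->|vx]; first by rewrite f1x ltn_pmod.
    by rewrite f1E.
  have key y : e x y -> q <= natdist (f1 x) (f1 y) <= p - q /\
                        q <= natdist (f1 y) (f1 x) <= p - q.
    move=> exy.
    have yx : y != x by apply/eqP=> yx; move: exy; rewrite yx irr.
    rewrite f1x (f1E _ yx).
    case yX: (y \in X).
      apply: step_arith => //; first exact: fe.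
      by move: (sink y yX); rewrite /Darc exy.
    have eyx : e y x by rewrite sym.
    case: fc' => _ fe'; have := fe' _ _ exy; have := fe' _ _ eyx.
    by rewrite /recolour_by1 xX yX => ??; split.
  case: (eqVneq u x) => [eux|ux]; first by subst u; case: (key v euv).
  case: (eqVneq v x) => [evx|vx].
    by subst v; case: (key u) => //; rewrite sym.
  by rewrite !f1E //; apply: fe.
apply: rt_trans (_ : reconfigurable e p q f1 _).
  apply: rt_step; split; first by [].
  split; first exact: f1c.
  by exists x => w wx; rewrite f1E.
rewrite -e1; apply: IH.
- by move: cX; rewrite (cardsD1 x X) xX add1n => -[].
- exact: f1c.
- by rewrite e1.
- move=> [s [s2 us alls cyc]]; apply: nd; exists s; split => //.
    by apply: sub_all alls => z; rewrite inE => /andP[].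
  rewrite (@eq_in_cycle _ (mem (X :\ x)) _ (Darc e p q f1)) //.
  move=> a b; rewrite !inE => /andP[ax _] /andP[bx _].
  by rewrite /Darc !f1E.

Qed.

Theorem lemma2p7 (T : finType) (e : rel T) (p q : nat) (f : T -> nat) (X : {set T}) :
  symmetric e -> irreflexive e ->
  0 < q -> 2 * q <= p -> p < 4 * q ->
  pq_colouring e p q f ->
  pq_colouring e p q (recolour_by1 p f X) ->
  (reconfigurable e p q f (recolour_by1 p f X) <-> ~ has_dicycle_in e p q f X).
Proof.
move=> sym irr q0 h2 h4 fc fc'; split.
  move=> rc [s [s2 us alls cyc]].
  case: s s2 us alls cyc => [//|x s'] _ _ alls cyc.
  have xX : x \in X by move/allP: alls; apply; rewrite mem_head.
  have := @frozen T e p q f (x :: s') irr q0 h2 h4 cyc f _ rc (fun _ _ => erefl) x (mem_head _ _).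
  rewrite /recolour_by1 xX.
  have p0 : 0 < p by lia.
  have fxp : f x < p by case: fc.
  have := @mod2 p (f x + 1) p0 ltac:(lia); case=> -[? ->]; lia.
move=> nd; exact: (@backward T e p q sym irr q0 h2 h4 _ f X erefl fc fc' nd).
Qed.
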